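(* In the publication model, in the linear rational expectations equilibrium $P=\theta+b\varepsilon+c$ with $\varepsilon=\xi_j$, $b=\frac{\sigma_x^3}{\sigma_x^2+\sigma_y^2}$ and constant $c$, the publishing trader $j$, who knows $x_j=\theta+\sigma_x\varepsilon$ and $P$, can infer $\theta$ exactly: $\theta=\frac{\sigma_x(P-c)-b\,x_j}{\sigma_x-b}$ (note $\sigma_x-b=\frac{\sigma_x\sigma_y^2}{\sigma_x^2+\sigma_y^2}>0$), so that $\mathrm{Var}(\theta\mid x_j,P)=0$ and his demand is $k_j=\frac{\theta-P}{\gamma\sigma_\eta^2}$. In contrast, every other trader $i$ has $\mathrm{Var}(\theta\mid x_i,y_i,P)>0$. Hence trader $j$ gains an informational advantage over all other traders.
   Context: Baseline model. An asset is in aggregate supply $K>0$ and pays $\tilde\theta=\theta+\eta$, where $\eta\sim\mathcal N(0,\sigma_\eta^2)$, $\sigma_\eta>0$, is independent of everything else. A continuum of agents $i\in[0,1]$ hold a uniform (improper, uninformative) prior on $\theta$, so posteriors about $\theta$ are the Gaussian (generalized least squares) posteriors determined by the signals alone. Each agent $i$ observes a private signal $x_i=\theta+\sigma_x\xi_i$, $\sigma_x>0$, with $\xi_i\sim\mathcal N(0,1)$ i.i.d. across agents and independent of $\theta,\eta$. Agents have CARA utility $-E[e^{-\gamma k_i(\tilde\theta-P)}\mid \mathcal I_i]$ with $\gamma>0$ and information $\mathcal I_i$ (which includes the price $P$), so demand is $k_i=\frac{E[\tilde\theta\mid \mathcal I_i]-P}{\gamma\,\mathrm{Var}(\tilde\theta\mid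 \mathcal I_i)}$; the market clears when $\int_0^1k_i\,di=K$. Law-of-large-numbers convention: integrals over $i$ of idiosyncratic noise terms vanish. Publication model: a single trader $j$ publishes $x_j$; every other agent $i$ has information $\mathcal I_i=(x_i,y_i,P)$ with $y_i=x_j+\sigma_y\tau_i=\theta+\sigma_x\xi_j+\sigma_y\tau_i$, $\tau_i\sim\mathcal N(0,1)$ i.i.d., $\sigma_y>0$, independent of all other variables. Writing $\varepsilon:=\xi_j$, a linear rational expectations equilibrium is a triple $(a,b,c)$, $a\neq0$, such that when agents take $P=a\theta+b\varepsilon+c$ and form Bayesian posteriors, market clearing holds for every realization of $(\theta,\varepsilon)$ exactly at that price. Trader $j$ has measure zero, so his own demand does not affect the market-clearing price; trader $j$'s information is $\mathcal I_j=(x_j,P)$. *)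

(* Defs.v *)
From HB Require Import structures.
From mathcomp Require Import all_boot all_order all_algebra.
Set Implicit Arguments. Unset Strict Implicit. Unset Printing Implicit Defensive.
Import Order.TTheory GRing.Theory Num.Theory.
Local Open Scope ring_scope.

(* Linear-Gaussian signal model for an agent with an (improper) flat prior on
   theta: the agent observes the vector s : 'I_n -> R with
      s k = h k * theta + d k + \sum_l A k l * z l,
   where z : 'I_m are independent standard normal shocks (independent of theta).
   Under the uninformative prior the posterior of theta is the Gaussian
   generalized-least-squares posterior: its mean is w^T (s - d) and its
   variance is w^T A A^T w, where w is a best linear unbiased (GLS) weight
   vector, i.e. w minimizes w^T A A^T w subject to w^T h = 1. *)
Section GLS.
Variable R : realFieldType.

Definition unbiased n (h : 'I_n -> R) (w : 'I_n -> R) : Prop :=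
  \sum_(k < n) w k * h k = 1.

Definition lin_var n m (A : 'I_n -> 'I_m -> R) (w : 'I_n -> R) : R :=
  \sum_(l < m) (\sum_(k < n) w k * A k l) ^+ 2.

Definition gls_weight n m (h : 'I_n -> R) (A : 'I_n -> 'I_m -> R)
  (w : 'I_n -> R) : Prop :=
  unbiased h w /\ forall w', unbiased h w' -> lin_var A w <= lin_var A w'.

Definition post_var n m (h : 'I_n -> R) (A : 'I_n -> 'I_m -> R) (v : R) : Prop :=
  exists w, gls_weight h A w /\ v = lin_var A w.

Definition post_mean n m (h : 'I_n -> R) (A : 'I_n -> 'I_m -> R)
  (d s : 'I_n -> R) (mu : R) : Prop :=
  exists w, gls_weight h A w /\ mu = \sum_(k < n) w k * (s k - d k).

(* CARA demand: payoff theta~ = theta + eta with eta ~ N(0, sigma_eta^2)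
   independent, so E[theta~|I] = mu and Var(theta~|I) = v + sigma_eta^2. *)
Definition cara_demand (gamma sigma_eta mu v P : R) : R :=
  (mu - P) / (gamma * (v + sigma_eta ^+ 2)).

Definition vec n (l : seq R) : 'I_n -> R := fun k => nth 0 l k.
Definition mat n m (l : seq (seq R)) : 'I_n -> 'I_m -> R :=
  fun k j => nth 0 (nth [::] l k) j.

End GLS.

(* Main.v *)
Require Import Defs.
From mathcomp Require Import all_boot all_order all_algebra.
From mathcomp Require Import ring lra.
Import Order.TTheory GRing.Theory Num.Theory.
Local Open Scope ring_scope.

Lemma sum1 (R : realFieldType) (F : 'I_1 -> R) : \sum_(k < 1) F k = F (@Ordinal 1 0 isT).
Proof. by rewrite big_ord1; congr F; apply: val_inj. Qed.
Lemma sum2 (R : realFieldType) (F : 'I_2 -> R) :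
  \sum_(k < 2) F k = F (@Ordinal 2 0 isT) + F (@Ordinal 2 1 isT).
Proof. rewrite !big_ord_recl big_ord0 addr0; congr (F _ + F _); exact: val_inj. Qed.
Lemma sum3 (R : realFieldType) (F : 'I_3 -> R) :
  \sum_(k < 3) F k = F (@Ordinal 3 0 isT) + F (@Ordinal 3 1 isT) + F (@Ordinal 3 2 isT).
Proof. rewrite !big_ord_recl big_ord0 addr0 addrA; congr (F _ + F _ + F _); exact: val_inj. Qed.

Lemma lin_var_ge0 (R : realFieldType) n m (A : 'I_n -> 'I_m -> R) w : 0 <= lin_var A w.
Proof. by apply: sumr_ge0 => l _; exact: sqr_ge0. Qed.

Section J.
Variables (R : realFieldType) (sx b : R).
Hypothesis hsb : 0 < sx - b.
Let hj : 'I_2 -> R := vec [:: 1; 1].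
Let Aj : 'I_2 -> 'I_1 -> R := mat [:: [:: sx]; [:: b]].
Let wj : 'I_2 -> R := vec [:: - b / (sx - b); sx / (sx - b)].

Lemma hsb0 : sx - b != 0. Proof. by rewrite gt_eqF. Qed.

Lemma wj_gls : gls_weight hj Aj wj /\ lin_var Aj wj = 0.
Proof.
have h0 := hsb0.
have e : lin_var Aj wj = 0.
  by rewrite /lin_var sum1 sum2 /wj /Aj /mat /vec /=; apply/eqP; rewrite sqrf_eq0;
    apply/eqP; field.
split=> //; split.
  by rewrite /unbiased sum2 /wj /hj /vec /=; field.
by move=> w' _; rewrite e lin_var_ge0.
Qed.

Lemma postj0 : post_var hj Aj 0 /\ (forall v, post_var hj Aj v -> v = 0).
Proof.
have [g e] := wj_gls.
split; first by exists wj.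
move=> v [w [[_ Hm] ->]].
apply/eqP; rewrite eq_le lin_var_ge0 andbT -e; apply: Hm; by case: g.
Qed.

Lemma gls_j w : gls_weight hj Aj w ->
  w (@Ordinal 2 0 isT) + w (@Ordinal 2 1 isT) = 1 /\
  w (@Ordinal 2 0 isT) * sx + w (@Ordinal 2 1 isT) * b = 0.
Proof.
have [g e] := wj_gls.
move=> [Hu Hm]; split.
  by move: Hu; rewrite /unbiased sum2 /hj /vec /= !mulr1.
have : lin_var Aj w = 0.
  apply/eqP; rewrite eq_le lin_var_ge0 andbT -e; apply: Hm; by case: g.
by rewrite /lin_var sum1 sum2 /Aj /mat /= => /eqP; rewrite sqrf_eq0 => /eqP.
Qed.

Lemma meanj c theta eps (dj : 'I_2 -> R) (sj : 'I_2 -> R) :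
  dj = vec [:: 0; c] -> sj = vec [:: theta + sx * eps; theta + b * eps + c] ->
  (exists mu, post_mean hj Aj dj sj mu) /\
  (forall mu, post_mean hj Aj dj sj mu -> mu = theta).
Proof.
move=> -> ->.
have [g e] := wj_gls.
have key : forall w, gls_weight hj Aj w ->
    \sum_(k < 2) w k * (vec [:: theta + sx * eps; theta + b * eps + c] k - vec [:: 0; c] k) = theta.
  move=> w /gls_j [h1 h2]; rewrite sum2 /vec /=.
  set w0 := w _ in h1 h2 *; set w1 := w _ in h1 h2 *.
  have -> : w0 * (theta + sx * eps - 0) + w1 * (theta + b * eps + c - c)
    = (w0 + w1) * theta + eps * (w0 * sx + w1 * b) by ring.
  by rewrite h1 h2; ring.
split; first by exists theta, wj; split => //; rewrite key.
by move=> mu [w [gw ->]]; apply: key.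
Qed.
End J.

Section I.
Variables (R : realFieldType) (sx sy b t : R).
Let hi : 'I_3 -> R := vec [:: 1; 1; 1].
Let Ai : 'I_3 -> 'I_3 -> R :=
    mat [:: [:: sx; 0; 0]; [:: 0; sx; sy]; [:: 0; b; 0]].

Definition Fi (w0 w1 w2 : R) := (w0 * sx) ^+ 2 + (w1 * sx + w2 * b) ^+ 2 + (w1 * sy) ^+ 2.

Lemma lvi w : lin_var Ai w = Fi (w (@Ordinal 3 0 isT)) (w (@Ordinal 3 1 isT)) (w (@Ordinal 3 2 isT)).
Proof. rewrite /lin_var !sum3 /Ai /mat /= /Fi; ring. Qed.

Lemma unbi w : unbiased hi w ->
  w (@Ordinal 3 0 isT) + w (@Ordinal 3 1 isT) + w (@Ordinal 3 2 isT) = 1.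
Proof. by rewrite /unbiased sum3 /hi /vec /= !mulr1. Qed.

Lemma posi (hsx : 0 < sx) (hsy : 0 < sy) (hb : 0 < b) v : post_var hi Ai v -> 0 < v.
Proof.
move=> [w [[Hu _] ->]]; rewrite lvi /Fi; have := unbi w Hu.
set w0 := w _; set w1 := w _; set w2 := w _ => h.
rewrite lt_def; apply/andP; split; last first.
  by rewrite !addr_ge0 ?sqr_ge0.
apply/negP => /eqP H.
have a1 := sqr_ge0 (w0 * sx); have a2 := sqr_ge0 (w1 * sx + w2 * b);
have a3 := sqr_ge0 (w1 * sy).
have z1 : (w0 * sx) ^+ 2 = 0 by lra.
have z2 : (w1 * sx + w2 * b) ^+ 2 = 0 by lra.
have z3 : (w1 * sy) ^+ 2 = 0 by lra.
move/eqP: z1; rewrite sqrf_eq0 mulf_eq0 (gt_eqF hsx) orbF => /eqP e0.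
move/eqP: z3; rewrite sqrf_eq0 mulf_eq0 (gt_eqF hsy) orbF => /eqP e1.
move/eqP: z2; rewrite sqrf_eq0 => /eqP z2.
have e2 : w2 = 1 by lra.
move: z2; rewrite e1 e2 mul0r add0r mul1r => z2.
by move: hb; rewrite z2 ltxx.
Qed.

Lemma mini (E1 : (b - sx * t) * sx - sy ^+ 2 * t = sx ^+ 2 * t)
  (E2 : (b - sx * t) * b = sx ^+ 2 * t) :
  post_var hi Ai (Fi t (- t) 1).
Proof.
exists (vec [:: t; -t; 1]); split; last by rewrite lvi /vec.
split; first by rewrite /unbiased sum3 /hi /vec /=; ring.
move=> w' Hu; have := unbi w' Hu; rewrite !lvi /vec /=.
set w0 := w' _; set w1 := w' _; set w2 := w' _ => h.
have H : Fi w0 w1 w2 - Fi t (-t) 1 = Fi (w0 - t) (w1 + t) (w2 - 1)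
   + 2 * (sx ^+ 2 * t * (w0 - t) + ((b - sx * t) * sx - sy ^+ 2 * t) * (w1 + t)
          + (b - sx * t) * b * (w2 - 1)) by rewrite /Fi; ring.
rewrite E1 E2 in H.
have H2 : sx ^+ 2 * t * (w0 - t) + sx ^+ 2 * t * (w1 + t) + sx ^+ 2 * t * (w2 - 1)
   = sx ^+ 2 * t * (w0 + w1 + w2 - 1) by ring.
rewrite H2 h subrr mulr0 mulr0 addr0 in H.
have : 0 <= Fi (w0 - t) (w1 + t) (w2 - 1) by rewrite /Fi !addr_ge0 ?sqr_ge0.
lra.
Qed.
End I.

Theorem proposition4 (R : realFieldType) (sx sy seta gamma c : R) :
  0 < sx -> 0 < sy -> 0 < seta -> 0 < gamma ->
  let b := sx ^+ 3 / (sx ^+ 2 + sy ^+ 2) in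
  let hj : 'I_2 -> R := vec [:: 1; 1] in
  let Aj : 'I_2 -> 'I_1 -> R := mat [:: [:: sx]; [:: b]] in
  let dj : 'I_2 -> R := vec [:: 0; c] in
  let hi : 'I_3 -> R := vec [:: 1; 1; 1] in
  let Ai : 'I_3 -> 'I_3 -> R :=
    mat [:: [:: sx; 0; 0]; [:: 0; sx; sy]; [:: 0; b; 0]] in
  [/\ sx - b = sx * sy ^+ 2 / (sx ^+ 2 + sy ^+ 2), 0 < sx - b,
      (* trader j: exact inference of theta from (x_j, P) *)
      (forall theta eps : R,
         let xj := theta + sx * eps in
         let P := theta + b * eps + c in
         let sj : 'I_2 -> R := vec [:: xj; P] in
         [/\ theta = (sx * (P - c) - b * xj) / (sx - b),
             post_var hj Aj 0 /\ (forall v, post_var hj Aj v -> v = 0),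
             (exists mu, post_mean hj Aj dj sj mu),
             (forall mu, post_mean hj Aj dj sj mu -> mu = theta) &
             (forall mu v, post_mean hj Aj dj sj mu -> post_var hj Aj v ->
                cara_demand gamma seta mu v P
                = (theta - P) / (gamma * seta ^+ 2))]),
      (* every other trader i: strictly positive posterior variance *)
      (exists v, post_var hi Ai v) &
      (forall v, post_var hi Ai v -> 0 < v)].
Proof.
move=> hsx hsy hse hg b hj Aj dj hi Ai.
have hD : 0 < sx ^+ 2 + sy ^+ 2 by rewrite addr_gt0 // exprn_gt0.
have hD0 : sx ^+ 2 + sy ^+ 2 != 0 by rewrite gt_eqF.
have hDx : sx ^+ 2 + sy ^+ 2 + sx ^+ 2 != 0 by rewrite gt_eqF // addr_gt0 // exprn_gt0.
have hsx0 : sx != 0 by rewrite gt_eqF.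
have Esb : sx - b = sx * sy ^+ 2 / (sx ^+ 2 + sy ^+ 2) by rewrite /b; field.
have hsb : 0 < sx - b by rewrite Esb divr_gt0 // mulr_gt0 // exprn_gt0.
have hb : 0 < b by rewrite /b divr_gt0 // exprn_gt0.
have hsb0 : sx - b != 0 by rewrite gt_eqF.
split => //.
- move=> theta eps xj P sj.
  have [Hex Hmu] := @meanj R sx b hsb c theta eps dj sj (erefl _) (erefl _).
  have [Hv0 Hv] := @postj0 R sx b hsb.
  split => //.
  + by rewrite /P /xj; field.
  + move=> mu v Hm Hpv; rewrite (Hmu _ Hm) (Hv _ Hpv) /cara_demand add0r //.
- set t := sx ^+ 4 / ((sx ^+ 2 + sy ^+ 2) * (sx ^+ 2 + sy ^+ 2 + sx ^+ 2)).
  exists (@Fi R sx sy b t (-t) 1); apply: (@mini R sx sy b t).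
  + by rewrite /t /b; field; rewrite hD0 hDx.
  + by rewrite /t /b; field; rewrite hD0 hDx.
- by move=> v; apply: (@posi R sx sy b).
Qed.
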